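(* Let $n$ be a nonnegative integer and let $x,y$ be complex numbers such that no denominator below vanishes. Then \[ \sum_{k=0}^{n}(-1)^k\binom{n}{k}\frac{\binom{2x+k}{k}\binom{2y+k}{k}}{\binom{2x+n+k}{k}\binom{2x-2y+k}{k}} \frac{1+2x+2k}{1+2x+n+k}H_{k}(x) =\frac{1}{2}\frac{\binom{2x+n}{n}\binom{x-2y-1+n}{n}}{\binom{x+n}{n}\binom{2x-2y+n}{n}}\big\{H_n(x)-H_{n}(x-2y-1)\big\}. \]
   Context: For complex $z$ and a nonnegative integer $k$, $\binom{z}{k}=\frac{z(z-1)\cdots(z-k+1)}{k!}$ (with $\binom{z}{0}=1$). For complex $x$ and nonnegative integer $m$, $H_0(x)=0$ and $H_m(x)=\sum_{j=1}^m\frac{1}{x+j}$ for $m\ge1$. The parameters are assumed to be such that all denominators are nonzero. *)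

(* Defs.v *)
From HB Require Import structures.
From mathcomp Require Import all_boot all_order all_algebra.
From mathcomp Require Import complex reals.
Set Implicit Arguments. Unset Strict Implicit. Unset Printing Implicit Defensive.
Import Order.TTheory GRing.Theory Num.Theory.
Local Open Scope ring_scope.

Definition binom (F : fieldType) (z : F) (k : nat) : F :=
  (\prod_(i < k) (z - i%:R)) / (k`!)%:R.

Definition Hsum (F : fieldType) (m : nat) (x : F) : F :=
  \sum_(j < m) (x + (j.+1)%:R)^-1.

(* Main.v *)
Require Import Defs.
From HB Require Import structures.
From mathcomp Require Import all_boot all_order all_algebra.
From mathcomp Require Import complex reals.
From mathcomp Require Import ring zify.
Import Order.TTheory GRing.Theory Num.Theory.
Local Open Scope ring_scope.
Set Implicit Arguments. Unset Strict Implicit.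

Lemma natrS1 (F : pzSemiRingType) n : (n.+1)%:R = n%:R + 1 :> F.
Proof. by rewrite natr1. Qed.

Definition rf (F : numFieldType) (z : F) (m : nat) : F := \prod_(i < m) (z + i%:R).

Lemma rf0 (F : numFieldType) (z : F) : rf z 0%N = 1.
Proof. by rewrite /rf big_ord0. Qed.

Lemma rfSr (F : numFieldType) (z : F) m : rf z m.+1 = rf z m * (z + m%:R).
Proof. by rewrite /rf big_ord_recr. Qed.

Lemma rfSl (F : numFieldType) (z : F) m : rf z m.+1 = z * rf (z + 1) m.
Proof.
rewrite /rf big_ord_recl addr0; congr (_ * _); apply: eq_bigr => i _.
have -> : (lift ord0 i : nat) = i.+1 by [].
by rewrite natrS1 addrA [z + _ + _]addrAC.
Qed.

Lemma rfD (F : numFieldType) (z : F) m p : rf z (m + p) = rf z m * rf (z + m%:R) p.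
Proof.
elim: p => [|p IH]; first by rewrite addn0 rf0 mulr1.
by rewrite addnS !rfSr IH natrD addrA mulrA.
Qed.

Lemma rf_neq0 (F : numFieldType) (z : F) m :
  (forall i, (i < m)%N -> z + i%:R != 0) -> rf z m != 0.
Proof. move=> h; rewrite /rf; apply/prodf_neq0 => i _; exact: h. Qed.

Lemma rf_fac_neq0 (F : numFieldType) (z : F) m i : rf z m != 0 -> (i < m)%N -> z + i%:R != 0.
Proof.
move=> h lt; move: h; rewrite /rf (bigD1 (Ordinal lt)) //= mulf_eq0 negb_or.
by case/andP.
Qed.

Lemma binom_rf (F : numFieldType) (z : F) k :
  binom z k = rf (z - k%:R + 1) k / (k`!)%:R.
Proof.
rewrite /binom /rf; congr (_ / _).
rewrite (reindex_inj rev_ord_inj) /=; apply: eq_bigr => i _.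
have hi := ltn_ord i.
have -> : (k - i.+1)%:R = (k%:R - i%:R - 1 : F).
  by rewrite natrB // natrS1 opprD addrA.
ring.
Qed.

Lemma binom_nat (F : numFieldType) n k : binom (n%:R : F) k = ('C(n, k))%:R.
Proof.
elim: k => [|k IH]; first by rewrite /binom big_ord0 bin0 mul1r fact0 invr1.
have ->: binom (n%:R : F) k.+1 = binom (n%:R : F) k * (n%:R - k%:R) / k.+1%:R.
  rewrite /binom big_ord_recr factS natrM /=.
  have h : (k.+1)%:R != 0 :> F by rewrite pnatr_eq0.
  have h2 : (k`!)%:R != 0 :> F by rewrite pnatr_eq0 -lt0n fact_gt0.
  by field; rewrite nat1r h h2.

rewrite IH.
have h : (k.+1)%:R != 0 :> F by rewrite pnatr_eq0.
apply: (mulIf h); rewrite mulfVK // -natrM mulnC mul_bin_left.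
case: (leqP k n) => hk; first by rewrite natrM natrB // mulrC.
by rewrite bin_small // mul0r (eqP (ltnW hk)) mul0n.
Qed.


Definition Lf (F : numFieldType) (x y : F) n := Hsum n x - Hsum n (x - 2*y - 1).

Definition sh (F : numFieldType) (x y : F) n k :=
  (-1)^+k * ('C(n,k))%:R * rf (2*x+1) k * rf (2*y+1) k / rf (2*x-2*y+1) k
  * (1 + 2*x + 2*k%:R) * rf (2*x + n%:R + k%:R + 2) (n - k).

Definition sgx (F : numFieldType) (x y : F) n k :=
  - ((-1)^+k * ('C(n.+1,k))%:R * k%:R / (n.+1)%:R * rf (2*x+1) k * rf (2*y+1) k
     / rf (2*x-2*y+1) k * (2*x-2*y+k%:R) / ((x+n%:R+1)*(2*x-2*y+n%:R+1))
     * rf (2*x+n%:R+k%:R+2) (n.+2 - k)).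

Definition sg (F : numFieldType) (x y : F) n k := sgx x y n k * (x + k%:R).

Definition ps (F : numFieldType) (x y : F) n k :=
  sg x y n k * (2 * Hsum k x - Lf x y n + (x - 2*y + n%:R)^-1) - sgx x y n k.

Definition rh (F : numFieldType) (x y : F) n :=
  (x-2*y+n%:R)*(2*x+2*n%:R+2)*(2*x+2*n%:R+3)/((x+n%:R+1)*(2*x-2*y+n%:R+1)).

Lemma eC1 (F : numFieldType) n k :
  ('C(n,k))%:R = ('C(n.+1,k))%:R * (n%:R + 1 - k%:R) / (n%:R + 1) :> F.
Proof.
have h : (n%:R + 1) != 0 :> F by rewrite natr1 pnatr_eq0.
apply: (mulIf h); rewrite mulfVK // natr1 -natrM mulnC mul_bin_down.
case: (leqP k n.+1) => hk.
  by rewrite natrM natrB // natrS1 mulrC.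
by rewrite bin_small // muln0 mul0r.
Qed.

Lemma eC2 (F : numFieldType) n k :
  ('C(n.+1,k.+1))%:R = ('C(n.+1,k))%:R * (n%:R + 1 - k%:R) / (k%:R + 1) :> F.
Proof.
have h : (k%:R + 1) != 0 :> F by rewrite natr1 pnatr_eq0.
apply: (mulIf h); rewrite mulfVK // natr1 -natrM mulnC mul_bin_left.
case: (leqP k n.+1) => hk.
  by rewrite natrM natrB // natrS1 mulrC.
by rewrite bin_small // muln0 mul0r.
Qed.

Lemma E0 (F : numFieldType) (x y : F) n k : (k <= n)%N ->
  x + n%:R + 1 != 0 -> 2*x-2*y+n%:R+1 != 0 -> rf (2*x-2*y+1) k != 0 ->
  2*x-2*y+1+k%:R != 0 ->
  sh x y n.+1 k - rh x y n * sh x y n k = sg x y n k.+1 - sg x y n k.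
Proof.
move=> hk h1 h2 hD hDk.
set V := rf (2*x+n%:R+k%:R+3) (n-k).+1.
set z := 2*x+n%:R+k%:R+2.
have eV1 : rf (2*x + (n.+1)%:R + k%:R + 2) (n.+1 - k) = V.
  rewrite subSn // /V; congr rf; rewrite natrS1; ring.
have eV2 : rf (2*x + n%:R + (k.+1)%:R + 2) (n.+2 - k.+1) = V.
  rewrite subSS subSn // /V; congr rf; rewrite natrS1; ring.
have eV3 : rf z (n.+2 - k) = z * V.
  have -> : (n.+2 - k = (n-k).+2)%N by lia.
  rewrite rfSl /V; congr (_ * rf _ _); rewrite /z; ring.
have eY : (2*x+2*n%:R+2)*(2*x+2*n%:R+3) * rf z (n - k) = z * V.
  rewrite -[z * V]eV3.
  have -> : (n.+2 - k = (n-k).+2)%N by lia.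
  rewrite !rfSr [((n-k).+1)%:R]natrS1 natrB // /z; ring.
have eRS : rh x y n * sh x y n k =
   (x-2*y+n%:R)/((x+n%:R+1)*(2*x-2*y+n%:R+1)) *
   ((-1)^+k * ('C(n,k))%:R * rf (2*x+1) k * rf (2*y+1) k / rf (2*x-2*y+1) k
    * (1 + 2*x + 2*k%:R)) * ((2*x+2*n%:R+2)*(2*x+2*n%:R+3) * rf z (n - k)).
  rewrite /rh /sh -/z; ring.
rewrite eRS eY /sh eV1 /sg /sgx eV2 -/z eV3.
rewrite [('C(n,k))%:R]eC1 eC2 !rfSr exprS [(n.+1)%:R]natrS1 [(k.+1)%:R]natrS1.
set s := (-1)^+k; set c := ('C(n.+1,k))%:R.
set A := rf (2*x+1) k; set B := rf (2*y+1) k; set D := rf (2*x-2*y+1) k.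
rewrite /z.
field.
by rewrite h1 h2 hD hDk !natr1 !pnatr_eq0.
Qed.

Lemma HsumS (F : numFieldType) k (x : F) : Hsum k.+1 x = Hsum k x + (x + k%:R + 1)^-1.
Proof. by rewrite /Hsum big_ord_recr /= natrS1 addrA. Qed.

Lemma LfS (F : numFieldType) (x y : F) n :
  Lf x y n.+1 = Lf x y n + (x + n%:R + 1)^-1 - (x - 2*y + n%:R)^-1.
Proof.
rewrite /Lf !HsumS.
have -> : x - 2 * y - 1 + n%:R + 1 = x - 2*y + n%:R by ring.
ring.
Qed.

Lemma E1 (F : numFieldType) (x y : F) n k : (k <= n)%N ->
  x + n%:R + 1 != 0 -> 2*x-2*y+n%:R+1 != 0 -> rf (2*x-2*y+1) k != 0 ->
  2*x-2*y+1+k%:R != 0 -> x + k%:R + 1 != 0 -> x - 2*y + n%:R != 0 ->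
  sh x y n.+1 k * (2 * Hsum k x - Lf x y n.+1)
  - rh x y n * sh x y n k * (2 * Hsum k x - Lf x y n)
  = ps x y n k.+1 - ps x y n k.
Proof.
move=> hk h1 h2 hD hDk h3 h4.
set V := rf (2*x+n%:R+k%:R+3) (n-k).+1.
set z := 2*x+n%:R+k%:R+2.
have eV1 : rf (2*x + (n.+1)%:R + k%:R + 2) (n.+1 - k) = V.
  rewrite subSn // /V; congr rf; rewrite natrS1; ring.
have eV2 : rf (2*x + n%:R + (k.+1)%:R + 2) (n.+2 - k.+1) = V.
  rewrite subSS subSn // /V; congr rf; rewrite natrS1; ring.
have eV3 : rf z (n.+2 - k) = z * V.
  have -> : (n.+2 - k = (n-k).+2)%N by lia.
  rewrite rfSl /V; congr (_ * rf _ _); rewrite /z; ring.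
have eY : (2*x+2*n%:R+2)*(2*x+2*n%:R+3) * rf z (n - k) = z * V.
  rewrite -[z * V]eV3.
  have -> : (n.+2 - k = (n-k).+2)%N by lia.
  rewrite !rfSr [((n-k).+1)%:R]natrS1 natrB // /z; ring.
have eRS : rh x y n * sh x y n k =
   (x-2*y+n%:R)/((x+n%:R+1)*(2*x-2*y+n%:R+1)) *
   ((-1)^+k * ('C(n,k))%:R * rf (2*x+1) k * rf (2*y+1) k / rf (2*x-2*y+1) k
    * (1 + 2*x + 2*k%:R)) * ((2*x+2*n%:R+2)*(2*x+2*n%:R+3) * rf z (n - k)).
  rewrite /rh /sh -/z; ring.
rewrite eRS eY /sh eV1 /ps /sg /sgx eV2 -/z eV3 LfS HsumS.
rewrite [('C(n,k))%:R]eC1 eC2 !rfSr exprS [(n.+1)%:R]natrS1 [(k.+1)%:R]natrS1.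
set s := (-1)^+k; set c := ('C(n.+1,k))%:R.
set A := rf (2*x+1) k; set B := rf (2*y+1) k; set D := rf (2*x-2*y+1) k.
set h := Hsum k x; set l := Lf x y n.
rewrite /z.
field.
by rewrite h1 h2 h3 h4 hD hDk !natr1 !pnatr_eq0.
Qed.

Lemma sh_out (F : numFieldType) (x y : F) n : sh x y n n.+1 = 0.
Proof. by rewrite /sh bin_small // mulr0 !mul0r. Qed.

Lemma sgx_out (F : numFieldType) (x y : F) n : sgx x y n n.+2 = 0.
Proof. by rewrite /sgx bin_small // mulr0 !mul0r oppr0. Qed.

Lemma sgx0 (F : numFieldType) (x y : F) n : sgx x y n 0 = 0.
Proof. by rewrite /sgx mulr0 !mul0r oppr0. Qed.

Lemma E0b (F : numFieldType) (x y : F) n :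
  x + n%:R + 1 != 0 -> 2*x-2*y+n%:R+1 != 0 -> rf (2*x-2*y+1) n.+1 != 0 ->
  sh x y n.+1 n.+1 - rh x y n * sh x y n n.+1 = sg x y n n.+2 - sg x y n n.+1.
Proof.
move=> h1 h2 hD.
rewrite sh_out /sg sgx_out mul0r mulr0 subr0 sub0r /sh /sgx subnn binn rf0 subSn // subnn.
rewrite [rf _ 1%N]rfSl rf0 [(n.+1)%:R]natrS1.
field.
by rewrite h1 h2 hD natr1 pnatr_eq0.
Qed.

Lemma E1b (F : numFieldType) (x y : F) n :
  x + n%:R + 1 != 0 -> 2*x-2*y+n%:R+1 != 0 -> rf (2*x-2*y+1) n.+1 != 0 ->
  x - 2*y + n%:R != 0 ->
  sh x y n.+1 n.+1 * (2 * Hsum n.+1 x - Lf x y n.+1)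
  - rh x y n * sh x y n n.+1 * (2 * Hsum n.+1 x - Lf x y n)
  = ps x y n n.+2 - ps x y n n.+1.
Proof.
move=> h1 h2 hD h4.
rewrite sh_out /ps /sg sgx_out mulr0 !mul0r subr0 !sub0r.
rewrite /sh /sgx subnn binn rf0 subSn // subnn LfS.
rewrite [rf _ 1%N]rfSl rf0 [(n.+1)%:R]natrS1.
set h := Hsum n.+1 x; set l := Lf x y n; set D := rf _ n.+1.
field.
by rewrite h1 h2 hD h4 natr1 pnatr_eq0.
Qed.


Definition Asum (F : numFieldType) (x y : F) n := \sum_(0 <= k < n.+1) sh x y n k.
Definition Bsum (F : numFieldType) (x y : F) n :=
  \sum_(0 <= k < n.+1) sh x y n k * (2 * Hsum k x - Lf x y n).

Lemma step (F : numFieldType) (x y : F) n :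
  (forall k, (k <= n)%N -> 2*x-2*y+1+k%:R != 0 /\ x + k%:R + 1 != 0) ->
  (forall k, (k <= n.+1)%N -> rf (2*x-2*y+1) k != 0) ->
  x + n%:R + 1 != 0 -> 2*x-2*y+n%:R+1 != 0 -> x - 2*y + n%:R != 0 ->
  Asum x y n.+1 = rh x y n * Asum x y n /\ Bsum x y n.+1 = rh x y n * Bsum x y n.
Proof.
move=> hK hD h1 h2 h4.
have sg0 : sg x y n 0 = 0 by rewrite /sg sgx0 mul0r.
have sgo : sg x y n n.+2 = 0 by rewrite /sg sgx_out mul0r.
have ps0 : ps x y n 0 = 0 by rewrite /ps sg0 sgx0 mul0r subr0.
have pso : ps x y n n.+2 = 0 by rewrite /ps sgo sgx_out mul0r subr0.
split.
- have T : \sum_(0 <= k < n.+2) (sh x y n.+1 k - rh x y n * sh x y n k)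
           = sg x y n n.+2 - sg x y n 0.
    apply: telescope_sumr_eq => // k /andP [_ hk].
    rewrite ltnS leq_eqVlt in hk; case/orP: hk => [/eqP -> | hk].
      by apply: E0b => //; apply: hD.
    have hk' : (k <= n)%N by [].
    have [a b] := hK k hk'.
    apply: E0 => //; apply: hD; exact: leqW.
  move: T; rewrite sgo sg0 subr0 sumrB -mulr_sumr [X in _ * X]big_nat_recr //= sh_out addr0.
  by move/eqP; rewrite subr_eq0 => /eqP.
- have T : \sum_(0 <= k < n.+2) (sh x y n.+1 k * (2 * Hsum k x - Lf x y n.+1)
              - rh x y n * sh x y n k * (2 * Hsum k x - Lf x y n))
           = ps x y n n.+2 - ps x y n 0.
    apply: telescope_sumr_eq => // k /andP [_ hk].
    rewrite ltnS leq_eqVlt in hk; case/orP: hk => [/eqP -> | hk].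
      by apply: E1b => //; apply: hD.
    have hk' : (k <= n)%N by [].
    have [a b] := hK k hk'.
    apply: E1 => //; apply: hD; exact: leqW.
  move: T; rewrite pso ps0 subr0 sumrB.
  under [X in _ - X = _]eq_bigr do rewrite -mulrA.
  rewrite -mulr_sumr [X in _ * X]big_nat_recr //= sh_out mul0r addr0.
  by move/eqP; rewrite subr_eq0 => /eqP.
Qed.

Definition Phat (F : numFieldType) (x y : F) n :=
  rf (2*x+1) (n.*2).+1 * rf (x - 2*y) n / (rf (x+1) n * rf (2*x-2*y+1) n).

Lemma main_ind (F : numFieldType) (x y : F) N :
  (forall j, (1 <= j <= N)%N -> x + j%:R != 0) ->
  (forall j, (1 <= j <= N)%N -> 2*x-2*y + j%:R != 0) ->
  (forall j, (1 <= j <= N)%N -> x - 2*y - 1 + j%:R != 0) ->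
  forall n, (n <= N)%N -> Asum x y n = Phat x y n /\ Bsum x y n = 0.
Proof.
move=> hx hxy hz.
have hD : forall k, (k <= N)%N -> rf (2*x-2*y+1) k != 0.
  move=> k hk; apply: rf_neq0 => i hi.
  have -> : 2*x-2*y+1+i%:R = 2*x-2*y+(i.+1)%:R by rewrite natrS1; ring.
  apply: hxy; lia.
have hX : forall k, (k <= N)%N -> rf (x+1) k != 0.
  move=> k hk; apply: rf_neq0 => i hi.
  have -> : x+1+i%:R = x+(i.+1)%:R by rewrite natrS1; ring.
  apply: hx; lia.
have e2 : forall n, ((n.*2)%:R : F) = 2 * n%:R by move=> n; rewrite -addnn natrD; ring.
elim=> [_|n IH hn].
  rewrite /Asum /Bsum /Phat big_nat1 /Lf /Hsum !big_ord0 /sh !rf0 rfSr rf0 /=.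
  split; last by rewrite big_nat1 big_ord0 mulr0 subrr subr0 mulr0.
  by rewrite expr0 bin0 e2; field.
have hn' : (n <= N)%N by lia.
have [IHA IHB] := IH hn'.
have h1 : x + n%:R + 1 != 0.
  have -> : x+n%:R+1 = x+(n.+1)%:R by rewrite natrS1; ring.
  apply: hx; lia.
have h2 : 2*x-2*y+n%:R+1 != 0.
  have -> : 2*x-2*y+n%:R+1 = 2*x-2*y+(n.+1)%:R by rewrite natrS1; ring.
  apply: hxy; lia.
have h4 : x-2*y+n%:R != 0.
  have -> : x-2*y+n%:R = x-2*y-1+(n.+1)%:R by rewrite natrS1; ring.
  apply: hz; lia.
have [SA SB] : Asum x y n.+1 = rh x y n * Asum x y n /\ Bsum x y n.+1 = rh x y n * Bsum x y n.
  apply: step => //.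
    move=> k hk; split.
      have -> : 2*x-2*y+1+k%:R = 2*x-2*y+(k.+1)%:R by rewrite natrS1; ring.
      apply: hxy; lia.
    have -> : x+k%:R+1 = x+(k.+1)%:R by rewrite natrS1; ring.
    apply: hx; lia.
  move=> k hk; apply: hD; lia.
split; last by rewrite SB IHB mulr0.
have e3 : (((n.*2).+1)%:R : F) = 2*n%:R+1 by rewrite natrS1 e2.
have e4 : (((n.*2).+2)%:R : F) = 2*n%:R+2 by rewrite natrS1 e3; ring.
rewrite SA IHA /Phat /rh doubleS !rfSr e3 e4.
have hDn := hD n hn'; have hXn := hX n hn'.
field.
have -> : x + 1 + n%:R = x + n%:R + 1 by ring.
have -> : 2*x-2*y+1+n%:R = 2*x-2*y+n%:R+1 by ring.
by rewrite h1 h2 hDn hXn.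
Qed.

Unset Implicit Arguments. Set Strict Implicit.

Lemma binom_rf' (F : numFieldType) (z : F) k :
  binom (z + k%:R) k = rf (z + 1) k / (k`!)%:R.
Proof. by rewrite binom_rf; congr (rf _ _ / _); ring. Qed.

Lemma fact_neq0 (F : numFieldType) k : (k`!)%:R != 0 :> F.
Proof. by rewrite pnatr_eq0 -lt0n fact_gt0. Qed.

Lemma rf_of_binom (F : numFieldType) (z : F) k : binom (z + k%:R) k != 0 -> rf (z + 1) k != 0.
Proof.
rewrite binom_rf'; apply: contraNneq => ->; by rewrite mul0r.
Qed.

Theorem theorem5 (R : realType) (n : nat) (x y : R[i])
  (hA : forall k : nat, (k <= n)%N -> binom (2 * x + n%:R + k%:R) k != 0)
  (hB : forall k : nat, (k <= n)%N -> binom (2 * x - 2 * y + k%:R) k != 0)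
  (hC : forall k : nat, (k <= n)%N -> 1 + 2 * x + n%:R + k%:R != 0)
  (hD : forall j : nat, (1 <= j <= n)%N -> x + j%:R != 0)
  (hE : forall j : nat, (1 <= j <= n)%N -> x - 2 * y - 1 + j%:R != 0)
  (hF : binom (x + n%:R) n != 0) :
  \sum_(0 <= k < n.+1)
     (-1) ^+ k * (binom n%:R k)
     * ((binom (2 * x + k%:R) k * binom (2 * y + k%:R) k)
        / (binom (2 * x + n%:R + k%:R) k * binom (2 * x - 2 * y + k%:R) k))
     * ((1 + 2 * x + 2 * k%:R) / (1 + 2 * x + n%:R + k%:R))
     * Hsum k x
  = 2^-1 * ((binom (2 * x + n%:R) n * binom (x - 2 * y - 1 + n%:R) n)
            / (binom (x + n%:R) n * binom (2 * x - 2 * y + n%:R) n))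
    * (Hsum n x - Hsum n (x - 2 * y - 1)).
Proof.
have hRB : forall k, (k <= n)%N -> rf (2*x-2*y+1) k != 0.
  by move=> k hk; apply: rf_of_binom; apply: hB.
have hxy : forall j, (1 <= j <= n)%N -> 2*x-2*y + j%:R != 0.
  move=> j /andP [j1 jn].
  have := rf_fac_neq0 (hRB j jn) (i := j.-1) _.
  have -> : 2*x-2*y+1+(j.-1)%:R = 2*x-2*y+j%:R.
    by case: j j1 {jn} => // j _; rewrite natrS1 /=; ring.
  apply; lia.
have [IA IB] := main_ind hD hxy hE (leqnn n).
set W := rf (2*x + n%:R + 1) n.+1.
have hW : W != 0.
  rewrite /W rfSr mulf_neq0 //.
    by apply: rf_of_binom; apply: hA.
  have -> : 2*x+n%:R+1+n%:R = 1 + 2*x + n%:R + n%:R by ring.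
  exact: hC.
have eL : forall k, (0 <= k < n.+1)%N ->
   (-1) ^+ k * (binom n%:R k)
     * ((binom (2 * x + k%:R) k * binom (2 * y + k%:R) k)
        / (binom (2 * x + n%:R + k%:R) k * binom (2 * x - 2 * y + k%:R) k))
     * ((1 + 2 * x + 2 * k%:R) / (1 + 2 * x + n%:R + k%:R))
     * Hsum k x = W^-1 * (sh x y n k * Hsum k x).
  move=> k /andP [_]; rewrite ltnS => hk.
  have hQ : rf (2*x+n%:R+1) k != 0 by apply: rf_of_binom; apply: hA.
  have hDk := hRB k hk.
  have hCk := hC k hk.
  set Y := rf (2*x + n%:R + k%:R + 2) (n - k).
  have eW : W = rf (2*x+n%:R+1) k * (2*x+n%:R+1+k%:R) * Y.
    rewrite /W.
    have -> : n.+1 = (k + (n - k).+1)%N by lia.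
    rewrite rfD rfSl mulrA /Y; congr (_ * rf _ _); ring.
  have hY : Y != 0 by move: hW; rewrite eW mulf_eq0 negb_or => /andP [].
  have hz : 2*x+n%:R+1+k%:R != 0.
    have -> : 2*x+n%:R+1+k%:R = 1 + 2*x + n%:R + k%:R by ring.
    exact: hCk.
  rewrite eW /sh -/Y binom_nat !binom_rf'.
  have -> : 2*x - 2*y + 1 = 2*x-2*y+1 by [].
  move: hDk hQ hY hz hCk (fact_neq0 R[i] k).
  set D := rf _ k; set Q := rf _ k; set A := rf _ k; set B := rf _ k.
  move=> hDk hQ hY hz hCk hf.
  field.
  by rewrite hDk hY hz hQ hf.
rewrite (eq_big_nat _ _ eL) -mulr_sumr.
have eB : Bsum x y n = 2 * (\sum_(0 <= k < n.+1) sh x y n k * Hsum k x)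
                      - Lf x y n * Asum x y n.
  rewrite /Bsum /Asum !mulr_sumr -sumrB; apply: eq_bigr => k _; ring.
move: eB; rewrite IB IA => /eqP; rewrite eq_sym subr_eq0 => /eqP eB.
have -> : \sum_(0 <= k < n.+1) sh x y n k * Hsum k x = 2^-1 * (Lf x y n * Phat x y n).
  by rewrite -eB mulrA mulVf ?mul1r // pnatr_eq0.
rewrite /Lf /Phat.
rewrite !binom_rf'.
have -> : x - 2*y - 1 + 1 = x - 2*y by ring.
have -> : (n.*2).+1 = (n + n.+1)%N by rewrite -addnn addnS.
rewrite rfD.
have -> : rf (2 * x + 1 + n%:R) n.+1 = W by rewrite /W; congr rf; ring.
have hX : rf (x + 1) n != 0 by apply: rf_of_binom.
have hDn := hRB n (leqnn n).
have hf := fact_neq0 R[i] n.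
field.
by rewrite hX hDn hf hW.
Qed.
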